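(* In the simplified model with conditional inclusion lists, regardless of the payment rule, if $B_1>f_{BP}$, then there is a Nash equilibrium in which every includer omits $t_0$ from its inclusion list and the block producer omits $t_0$ from the block.
   Context: Simplified model (single slot, complete information, Nash equilibrium). Players: a block producer and $m$ includers with distinct orders $1,\dots,m$. A mempool $M$ of $w$ user transactions, each of size $s>0$; $t_0\in M$ is a target transaction. Each inclusion list holds at most $c_{Incl}$ transactions and the block at most $c_{block}$. Each includer chooses an inclusion list consisting of transactions from $M$ and/or fake transactions it creates; then the block producer, seeing all lists, chooses a block consisting of transactions from $M$ and/or fake transactions it creates. No party may add transactions to the mempool. Every transaction in an approved block pays burning fee $r\cdot s$ ($r\ge0$); for fake transactions this is paid by their creator. Processing costs are zero. Conditional inclusion lists: the attesters reject the block iff some transaction appearing in an inclusion list is missing from the block while the block contains fewer than $c_{block}$ transactions. If the block is rejected, the block producer and includers receive no fees. Payments: if $t_0$ is in an approved block, the block producer receives $f_{BP}\ge0$ from $t_0$ (whether or not $t_0$ is in a list); the includers collectively receive at most $f_{CM}\ge0$ from $t_0$, and only if $t_0$ is in some inclusion list and in the approved block. An external briber pays the block producer $B_1$ if $t_0$ is not in its block, and pays includer $j$ the amount $B^j\ge0$ if $t_0$ is not in its inclusion list. Each player's utility is fees received plus bribes received minus burning fees paid for its own fake transactions in an approved block. *)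

(* Defs.v *)
From HB Require Import structures.
From mathcomp Require Import all_boot all_order all_algebra.
Set Implicit Arguments. Unset Strict Implicit. Unset Printing Implicit Defensive.
Import Order.TTheory GRing.Theory Num.Theory.
Local Open Scope ring_scope.

(* Transactions: either one of the w mempool transactions ('I_w), or a fake
   transaction identified by its creator (None = block producer,
   Some j = includer j) and a serial number. All have the same size s. *)
Definition tx (m w : nat) := ('I_w + (option 'I_m * nat))%type.

Definition in_mempool (m w : nat) (t : tx m w) : bool :=
  if t is inl _ then true else false.

Definition created_by (m w : nat) (a : option 'I_m) (t : tx m w) : bool :=
  if t is inr (c, _) then c == a else false.

Definition profile (m w : nat) := 'I_m -> seq (tx m w).

Definition valid_list (m w cIncl : nat) (j : 'I_m) (l : seq (tx m w)) : bool :=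
  [&& uniq l, (size l <= cIncl)%N
    & all (fun t => in_mempool t || created_by (Some j) t) l].

Definition valid_block (m w cblock : nat) (b : seq (tx m w)) : bool :=
  [&& uniq b, (size b <= cblock)%N
    & all (fun t => in_mempool t || created_by None t) b].

Definition approved (m w cblock : nat) (L : profile m w) (b : seq (tx m w)) : bool :=
  ~~ ([exists j, has (fun t => t \notin b) (L j)] && (size b < cblock)%N).

Definition upd (m w : nat) (L : profile m w) (j : 'I_m) (l : seq (tx m w)) : profile m w :=
  fun i => if i == j then l else L i.

(* A payment rule for the includers: given the lists and the block, the
   amount each includer receives from t0. *)
Definition pay_rule (R : realFieldType) (m w : nat) := profile m w -> seq (tx m w) -> 'I_m -> R.

Definition valid_pay_rule (R : realFieldType) (m w cblock : nat) (t0 : 'I_w) (fCM : R)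
  (rho : pay_rule R m w) : Prop :=
  forall (L : profile m w) (b : seq (tx m w)),
    [/\ forall j, 0 <= rho L b j,
        \sum_(j < m) rho L b j <= fCM
      & (exists j, rho L b j != 0) ->
        [/\ (inl t0 : tx m w) \in b, approved cblock L b
          & exists j', (inl t0 : tx m w) \in L j']].

(* The briber pays B1 whenever t0 is not in
   the block; the fee fBP is received only if t0 is in an approved block;
   burning fees r*s are paid for own fakes in an approved block. *)
Definition u_BP (R : realFieldType) (m w cblock : nat) (t0 : 'I_w) (s r fBP B1 : R)
  (L : profile m w) (b : seq (tx m w)) : R :=
  (if approved cblock L b && ((inl t0 : tx m w) \in b) then fBP else 0)
  + (if (inl t0 : tx m w) \notin b then B1 else 0)
  - (if approved cblock L b then (r * s) *+ count (created_by None) b else 0).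

Definition u_I (R : realFieldType) (m w cblock : nat) (t0 : 'I_w) (s r : R)
  (Bj : 'I_m -> R) (rho : pay_rule R m w)
  (L : profile m w) (b : seq (tx m w)) (j : 'I_m) : R :=
  rho L b j
  + (if (inl t0 : tx m w) \notin L j then Bj j else 0)
  - (if approved cblock L b then (r * s) *+ count (created_by (Some j)) b else 0).

Definition bp_strategy (m w : nat) := profile m w -> seq (tx m w).

Definition valid_bp_strategy (m w cIncl cblock : nat) (sigma : bp_strategy m w) : Prop :=
  forall L : profile m w, (forall j, valid_list cIncl j (L j)) ->
    valid_block cblock (sigma L).

Definition nash (R : realFieldType) (m w cIncl cblock : nat) (t0 : 'I_w)
  (s r fBP B1 : R) (Bj : 'I_m -> R) (rho : pay_rule R m w)
  (L : profile m w) (sigma : bp_strategy m w) : Prop :=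
  [/\ forall j, valid_list cIncl j (L j),
      valid_bp_strategy cIncl cblock sigma,
      forall j (l : seq (tx m w)), valid_list cIncl j l ->
        u_I cblock t0 s r Bj rho (upd L j l) (sigma (upd L j l)) j
          <= u_I cblock t0 s r Bj rho L (sigma L) j
    & forall sigma' : bp_strategy m w, valid_bp_strategy cIncl cblock sigma' ->
        u_BP cblock t0 s r fBP B1 L (sigma' L) <= u_BP cblock t0 s r fBP B1 L (sigma L)].

(* Main.v *)
Require Import Defs.
From HB Require Import structures.
From mathcomp Require Import all_boot all_order all_algebra.
Import Order.TTheory GRing.Theory Num.Theory.
Local Open Scope ring_scope.

Theorem mainTheorem7 (R : realFieldType) (m w cIncl cblock : nat) (t0 : 'I_w)
  (s r fBP fCM B1 : R) (Bj : 'I_m -> R) :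
  0 < s -> 0 <= r -> 0 <= fBP -> 0 <= fCM -> (forall j, 0 <= Bj j) ->
  fBP < B1 ->
  forall rho : pay_rule R m w, valid_pay_rule cblock t0 fCM rho ->
  exists (L : profile m w) (sigma : bp_strategy m w),
    [/\ nash cIncl cblock t0 s r fBP B1 Bj rho L sigma,
        forall j, (inl t0 : tx m w) \notin L j
      & (inl t0 : tx m w) \notin sigma L].
Proof.
move=> s0 r0 fBP0 fCM0 Bj0 hB rho hrho.
have rho0 : forall L j, rho L [::] j = 0.
  move=> L j; case: (hrho L [::]) => _ _ H.
  apply/eqP; apply/negPn/negP => hn.
  by case: (H (ex_intro _ j hn)).
exists (fun _ => [::]), (fun _ => [::]); split => //.
split.
- by move=> j; rewrite /valid_list.
- by move=> L _; rewrite /valid_block.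
- move=> j l _; rewrite /u_I !rho0 /= !add0r /upd eqxx.
  rewrite !mulr0n !if_same !subr0.
  by case: ifP => _; rewrite ?lexx.
- move=> sigma' _; rewrite /u_BP.
  have ap : approved cblock (fun _ : 'I_m => [::] : seq (tx m w)) [::].
    rewrite /approved; apply/negP => /andP [/existsP [j]] //.
  rewrite ap /= add0r subr0.
  have hc : 0 <= (if approved cblock (fun _ : 'I_m => [::] : seq (tx m w)) (sigma' (fun=> [::]))
       then (r * s) *+ count (created_by None) (sigma' (fun=> [::])) else 0).
    case: ifP => _ //; apply: mulrn_wge0; exact: mulr_ge0 (ltW s0).
  case: ((inl t0 : tx m w) \in sigma' (fun=> [::])) => /=.
  + rewrite addr0 andbT; apply: le_trans (_ : _ <= (if approved cblock (fun=> [::]) (sigma' (fun=> [::])) then fBP else 0)) _.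
      by rewrite gerBl.
    case: ifP => _ //; [exact: ltW | exact: le_trans fBP0 (ltW hB)].
  + rewrite andbF add0r; by rewrite gerBl.
Qed.
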